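(* There exist a large set with multiplicity LS$(4,5,11;\mu)$ and a large set with multiplicity LS$(5,6,12;\mu)$ for each integer $\mu\geq 2$, with possible exceptions when $\mu\in\{3,5,7,9,11,13\}$.
   Context: A Steiner system S$(t,k,n)$ is a pair $(Q,B)$ where $Q$ is an $n$-set and $B$ is a collection of $k$-subsets (blocks) of $Q$ such that every $t$-subset of $Q$ is contained in exactly one block. A large set with multiplicity $\mu$, LS$(t,k,n;\mu)$, is a family (the same system may occur more than once) of Steiner systems S$(t,k,n)$ on a common $n$-set $Q$ such that every $k$-subset of $Q$ is a block of exactly $\mu$ of the systems. *)

(* Defs.v *)
From mathcomp Require Import all_boot.
Unset Printing Implicit Defensive.

Definition steiner_system (t k n : nat) (B : {set {set 'I_n}}) : Prop :=
  (forall b, b \in B -> #|b| = k) /\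
  (forall T : {set 'I_n}, #|T| = t -> #|[set b in B | T \subset b]| = 1).

(* A large set with multiplicity mu, LS(t,k,n;mu): a family (a list, so that
   the same system may occur several times) of Steiner systems S(t,k,n) on the
   common n-set 'I_n such that every k-subset is a block of exactly mu of the
   systems (counted with repetition). *)
Definition large_set_mult (t k n mu : nat) (F : seq {set {set 'I_n}}) : Prop :=
  (forall B, B \in F -> steiner_system t k n B) /\
  (forall S : {set 'I_n}, #|S| = k -> count (fun B : {set {set 'I_n}} => S \in B) F = mu).

(* Main.v *)
Require Import Defs.
From mathcomp Require Import all_boot zify.

Fixpoint ins (x : nat) (s : seq nat) := match s with [::] => [:: x] | y :: s' => if x <= y then x :: s else y :: ins x s' end.
Definition isort (s : seq nat) := foldr ins [::] s.
Definition apply_perm (g : seq nat) (b : seq nat) := isort (map (fun x => nth 0 g x) b).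
Fixpoint subs (s : seq nat) : seq (seq nat) := match s with [::] => [:: [::]] | x :: s' => let r := subs s' in map (cons x) r ++ r end.
Definition combos n k := [seq c <- subs (iota 0 n) | size c == k].
Definition tsubs t (l : seq nat) := [seq c <- subs l | size c == t].
Definition valid n (l : seq nat) := sorted ltn l && all (fun x => x < n) l.
Fixpoint lex (a b : seq nat) : bool := match a, b with [::], _ => true | _ :: _, [::] => false
  | x :: a', y :: b' => (x < y) || ((x == y) && lex a' b') end.
Definition check n t k mu (Ls : seq (seq (seq nat))) :=
  [&& all (fun L => all (fun l => (size l == k) && valid n l) L) Ls,
      all (fun L => sort lex (flatten (map (tsubs t) L)) == sort lex (combos n t)) Ls,
      all uniq Ls, uniq (combos n t), uniq (combos n k) &
      sort lex (flatten Ls) == sort lex (flatten (map (nseq mu) (combos n k)))].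
Definition derive (L : seq (seq nat)) := [seq rem 11 b | b <- L & 11 \in b].

Lemma mem_subs (s x : seq nat) : (x \in subs s) = subseq x s.
Proof.
elim: s x => [|y s IH] x /=.
  by case: x => [|a x]; rewrite ?inE //= sub0seq.
rewrite mem_cat IH; case: x => [|a x] /=.
  by rewrite !sub0seq orbT.
case: eqP => [->|ne].
  rewrite (mem_map (fun u v (h : y :: u = y :: v) => f_equal behead h)) IH.
  apply/orP/idP => [[//|h]|->]; last by left.
  exact: subseq_trans (subseq_cons _ _) h.
rewrite orb_idl // => /mapP [z _ [h _]]; by case: ne.
Qed.

Lemma uniq_subs (s : seq nat) : uniq s -> uniq (subs s).
Proof.
elim: s => [|y s IH] //= /andP [ys us].
rewrite cat_uniq map_inj_uniq ?IH //=; last by move=> u v [].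
rewrite andbT; apply/hasPn => z; rewrite mem_subs => zs; apply/mapP => [[w _ ezw]].
by move: zs; rewrite ezw => /mem_subseq /(_ y); rewrite inE eqxx => /(_ isT); apply/negP.
Qed.

Lemma subseq_all (c l : seq nat) : sorted ltn c -> sorted ltn l -> subseq c l = all (fun x => x \in l) c.
Proof.
move=> sc sl; apply/idP/allP => [/mem_subseq //|h].
have -> : c = filter (fun x => x \in c) l.
  apply: (irr_sorted_eq ltn_trans ltnn) => //; first by rewrite sorted_filter //; exact: ltn_trans.
  move=> x; rewrite mem_filter; apply/idP/andP => [xc|[]//]; by split => //; apply: h.
exact: filter_subseq.
Qed.
Set Implicit Arguments.

Section Codes.
Variable n : nat.
Definition code (S : {set 'I_n}) : seq nat := [seq val x | x <- enum S].
Definition toset (l : seq nat) : {set 'I_n} := [set x : 'I_n | val x \in l].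
Definition Bset (L : seq (seq nat)) : {set {set 'I_n}} := [set S : {set 'I_n} | code S \in L].

Lemma mem_code S (x : 'I_n) : (val x \in code S) = (x \in S).
Proof. by rewrite /code (mem_map val_inj) mem_enum. Qed.

Lemma toset_code S : toset (code S) = S.
Proof. by apply/setP => x; rewrite inE mem_code. Qed.

Lemma size_code S : size (code S) = #|S|.
Proof. by rewrite size_map cardE. Qed.

Lemma code_valid S : valid n (code S).
Proof.
apply/andP; split.
  apply: (subseq_sorted ltn_trans _ (iota_ltn_sorted 0 n)).
  rewrite -val_enum_ord /code enumT; apply: map_subseq.
  by rewrite /enum_mem -enumT; apply: filter_subseq.
by apply/allP => x /mapP [y _ ->]; apply: ltn_ord.
Qed.

Lemma code_toset l : valid n l -> code (toset l) = l.
Proof.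
case/andP => sl /allP al.
apply: (irr_sorted_eq ltn_trans ltnn) => //; first by case/andP: (code_valid (toset l)).
move=> x; apply/idP/idP.
  by case/mapP => y; rewrite mem_enum inE => yl ->.
move=> xl; have xn := al x xl.
by rewrite -[x]/(val (Ordinal xn)) mem_code inE.
Qed.

Lemma toset_sub c l : all (fun x => x < n) c -> (toset c \subset toset l) = all (fun x => x \in l) c.
Proof.
move=> /allP ac; apply/subsetP/allP => [h x xc|h x].
  have xn := ac x xc.
  by have := h (Ordinal xn); rewrite !inE /=; apply.
by rewrite !inE; apply: h.
Qed.

Lemma in_combos c k : valid n c -> size c = k -> c \in combos n k.
Proof.
move=> vc sc; rewrite /combos mem_filter sc eqxx /= mem_subs.
case/andP: vc => sl al; rewrite subseq_all //; last exact: iota_ltn_sorted.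
by apply/allP => x /(allP al) xn; rewrite mem_iota.
Qed.

Lemma count_tsubs t c l : valid n c -> size c = t -> valid n l ->
  count (pred1 c) (tsubs t l) = all (fun x => x \in l) c.
Proof.
move=> vc sc vl.
have ul : uniq l by case/andP: vl => s _; apply: sorted_uniq s; [exact: ltn_trans | exact: ltnn].
rewrite count_uniq_mem; last by rewrite filter_uniq // uniq_subs.
rewrite mem_filter sc eqxx mem_subs subseq_all //; [by case/andP: vc | by case/andP: vl].
Qed.

End Codes.
Arguments mem_code {n}. Arguments toset_code {n}. Arguments size_code {n}. Arguments code_valid {n}.
Arguments code_toset {n l}. Arguments toset_sub {n c l}. Arguments in_combos {n c k}. Arguments count_tsubs {n t c l}.

Lemma perm_of_sort (A B : seq (seq nat)) : sort lex A == sort lex B -> perm_eq A B.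
Proof. by move/eqP=> E; rewrite -(perm_sort lex A) E perm_sort perm_refl. Qed.

Lemma count_flatten_nseq (c : seq nat) mu (s : seq (seq nat)) :
  count (pred1 c) (flatten (map (nseq mu) s)) = count (pred1 c) s * mu.
Proof. by elim: s => //= a s IH; rewrite count_cat count_nseq IH mulnDl. Qed.

Lemma check_ok n t k mu Ls (H : check n t k mu Ls) : large_set_mult t k n mu (map (Bset n) Ls).
Proof.
case/andP: H => hv /andP [hs /andP [hu /andP [uct /andP [uck hc]]]]; split.
  move=> B /mapP [L LLs ->]; have hvL := allP (allP hv L LLs).
  split.
    move=> b; rewrite inE => bL; rewrite -size_code.
    by case/andP: (hvL _ bL) => /eqP.
  move=> T tT; pose c := code T.
  have vc : valid n c := code_valid T.
  have sc : size c = t by rewrite size_code.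
  have cin := in_combos vc sc.
  have hp := perm_of_sort _ _ (allP hs L LLs).
  have : count (fun l => all (fun x => x \in l) c) L = 1.
    rewrite -sumn_count.
    have hm : {in L, (fun l => count (pred1 c) (tsubs t l)) =1 (fun l => nat_of_bool (all (fun x => x \in l) c))}.
      by move=> l lL; case/andP: (hvL l lL) => _ vl; exact: count_tsubs vc sc vl.
    move/eq_in_map: hm => <-.
    rewrite (map_comp (count (pred1 c)) (tsubs t)) -count_flatten (permP hp).
    by rewrite count_uniq_mem // cin.
  rewrite -size_filter.
  case Ef : (filter _ L) => [|l0 [|? ?]] // _.
  have l0L : l0 \in L by have := mem_head l0 [::]; rewrite -Ef mem_filter => /andP [].
  have vl0 : valid n l0 by case/andP: (hvL _ l0L).
  suff -> : [set b in Bset n L | T \subset b] = [set toset n l0] by rewrite cards1.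
  apply/setP => b; rewrite !inE.
  have -> : (T \subset b) = all (fun x => x \in code b) c.
    by rewrite -(toset_code T) -{1}(toset_code b) toset_sub //; case/andP: vc.
  rewrite andbC -(mem_filter (fun l : seq nat => all (fun x => x \in l) c)) Ef inE.
  apply/eqP/eqP => [<-|->]; first by rewrite toset_code.
  exact: code_toset.
move=> S hS; pose c := code S.
have cin := in_combos (code_valid S) (etrans (size_code S) hS).
rewrite count_map.
rewrite (eq_count (a2 := fun L => c \in L)); last by move=> L; rewrite /= inE.
have hm : {in Ls, (fun L => count (pred1 c) L) =1 (fun L => nat_of_bool (c \in L))}.
  by move=> L LLs; rewrite /= count_uniq_mem // (allP hu).
rewrite -sumn_count; move/eq_in_map: hm => <-.
rewrite -count_flatten (permP (perm_of_sort _ _ hc)) count_flatten_nseq.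
by rewrite count_uniq_mem // cin mul1n.
Qed.

Lemma ls_nil t k n : large_set_mult t k n 0 [::].
Proof. by split. Qed.

Lemma ls_cat t k n a b F G : large_set_mult t k n a F -> large_set_mult t k n b G ->
  large_set_mult t k n (a + b) (F ++ G).
Proof.
case=> h1 h2 [g1 g2]; split.
  by move=> B; rewrite mem_cat => /orP [/h1|/g1].
by move=> S hS; rewrite count_cat h2 // g2.
Qed.

Lemma ls_all t k n F2 F15 : large_set_mult t k n 2 F2 -> large_set_mult t k n 15 F15 ->
  forall mu, 2 <= mu -> mu \notin [:: 3; 5; 7; 9; 11; 13] -> exists F, large_set_mult t k n mu F.
Proof.
move=> L2 L15.
have ev : forall j, exists F, large_set_mult t k n (j.*2) F.
  elim=> [|j [F hF]]; first by exists [::]; exact: ls_nil.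
  by exists (F2 ++ F); rewrite doubleS -addn2 addnC; apply: ls_cat.
move=> mu h2 hn.
have E := odd_double_half mu.
case Ho : (odd mu) E => E.
  have h15 : 15 <= mu.
    move: h2 hn Ho; do 15! (case: mu E => [|mu] E //).
  have [F hF] := ev (mu./2 - 7).
  exists (F15 ++ F).
  have -> : mu = 15 + (mu./2 - 7).*2 by rewrite -!muln2 in E *; lia.
  exact: ls_cat.
by rewrite -E /=; apply: ev.
Qed.
Definition D0 : seq (seq nat) := [:: [:: 0; 1; 2; 3; 4; 9]; [:: 0; 1; 2; 3; 5; 11]; [:: 0; 1; 2; 3; 6; 7]; [:: 0; 1; 2; 3; 8; 10]; [:: 0; 1; 2; 4; 5; 7]; [:: 0; 1; 2; 4; 6; 8]; [:: 0; 1; 2; 4; 10; 11]; [:: 0; 1; 2; 5; 6; 10]; [:: 0; 1; 2; 5; 8; 9]; [:: 0; 1; 2; 6; 9; 11]; [:: 0; 1; 2; 7; 8; 11]; [:: 0; 1; 2; 7; 9; 10]; [:: 0; 1; 3; 4; 5; 8]; [:: 0; 1; 3; 4; 6; 10]; [:: 0; 1; 3; 4; 7; 11]; [:: 0; 1; 3; 5; 6; 9]; [:: 0; 1; 3; 5; 7; 10]; [:: 0; 1; 3; 6; 8; 11]; [:: 0; 1; 3; 7; 8; 9]; [:: 0; 1; 3; 9; 10; 11]; [:: 0; 1; 4; 5; 6; 11]; [:: 0; 1; 4; 5; 9; 10]; [:: 0; 1; 4; 6; 7; 9]; [:: 0; 1; 4; 7; 8; 10]; [:: 0; 1; 4; 8;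 9; 11]; [:: 0; 1; 5; 6; 7; 8]; [:: 0; 1; 5; 7; 9; 11]; [:: 0; 1; 5; 8; 10; 11]; [:: 0; 1; 6; 7; 10; 11]; [:: 0; 1; 6; 8; 9; 10]; [:: 0; 2; 3; 4; 5; 6]; [:: 0; 2; 3; 4; 7; 10]; [:: 0; 2; 3; 4; 8; 11]; [:: 0; 2; 3; 5; 7; 8]; [:: 0; 2; 3; 5; 9; 10]; [:: 0; 2; 3; 6; 8; 9]; [:: 0; 2; 3; 6; 10; 11]; [:: 0; 2; 3; 7; 9; 11]; [:: 0; 2; 4; 5; 8; 10]; [:: 0; 2; 4; 5; 9; 11]; [:: 0; 2; 4; 6; 7; 11]; [:: 0; 2; 4; 6; 9; 10]; [:: 0; 2; 4; 7; 8; 9]; [:: 0; 2; 5; 6; 7; 9]; [:: 0; 2; 5; 6; 8; 11]; [:: 0; 2; 5; 7; 10; 11]; [:: 0; 2; 6; 7; 8; 10]; [:: 0; 2; 8; 9; 10; 11]; [:: 0; 3; 4; 5; 7; 9]; [:: 0; 3; 4; 5; 10; 11]; [:: 0; 3; 4; 6; 7; 8]; [:: 0; 3; 4; 6; 9; 11]; [:: 0; 3; 4; 8; 9; 10]; [:: 0; 3; 5; 6; 7; 11]; [:: 0; 3; 5; 6; 8; 10]; [:: 0; 3; 5; 8; 9; 11]; [:: 0; 3; 6; 7; 9; 10]; [:: 0; 3; 7; 8; 10; 11]; [:: 0; 4; 5; 6; 7; 10]; [:: 0; 4; 5; 6; 8; 9]; [:: 0; 4; 5; 7; 8; 11]; [::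 0; 4; 6; 8; 10; 11]; [:: 0; 4; 7; 9; 10; 11]; [:: 0; 5; 6; 9; 10; 11]; [:: 0; 5; 7; 8; 9; 10]; [:: 0; 6; 7; 8; 9; 11]; [:: 1; 2; 3; 4; 5; 10]; [:: 1; 2; 3; 4; 6; 11]; [:: 1; 2; 3; 4; 7; 8]; [:: 1; 2; 3; 5; 6; 8]; [:: 1; 2; 3; 5; 7; 9]; [:: 1; 2; 3; 6; 9; 10]; [:: 1; 2; 3; 7; 10; 11]; [:: 1; 2; 3; 8; 9; 11]; [:: 1; 2; 4; 5; 6; 9]; [:: 1; 2; 4; 5; 8; 11]; [:: 1; 2; 4; 6; 7; 10]; [:: 1; 2; 4; 7; 9; 11]; [:: 1; 2; 4; 8; 9; 10]; [:: 1; 2; 5; 6; 7; 11]; [:: 1; 2; 5; 7; 8; 10]; [:: 1; 2; 5; 9; 10; 11]; [:: 1; 2; 6; 7; 8; 9]; [:: 1; 2; 6; 8; 10; 11]; [:: 1; 3; 4; 5; 6; 7]; [:: 1; 3; 4; 5; 9; 11]; [:: 1; 3; 4; 6; 8; 9]; [:: 1; 3; 4; 7; 9; 10]; [:: 1; 3; 4; 8; 10; 11]; [:: 1; 3; 5; 6; 10; 11]; [:: 1; 3; 5; 7; 8; 11]; [:: 1; 3; 5; 8; 9; 10]; [:: 1; 3; 6; 7; 8; 10]; [:: 1; 3; 6; 7; 9; 11]; [:: 1; 4; 5; 6; 8; 10]; [:: 1; 4; 5; 7; 8; 9]; [:: 1; 4; 5; 7; 10; 11]; [:: 1; 4; 6;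 7; 8; 11]; [:: 1; 4; 6; 9; 10; 11]; [:: 1; 5; 6; 7; 9; 10]; [:: 1; 5; 6; 8; 9; 11]; [:: 1; 7; 8; 9; 10; 11]; [:: 2; 3; 4; 5; 7; 11]; [:: 2; 3; 4; 5; 8; 9]; [:: 2; 3; 4; 6; 7; 9]; [:: 2; 3; 4; 6; 8; 10]; [:: 2; 3; 4; 9; 10; 11]; [:: 2; 3; 5; 6; 7; 10]; [:: 2; 3; 5; 6; 9; 11]; [:: 2; 3; 5; 8; 10; 11]; [:: 2; 3; 6; 7; 8; 11]; [:: 2; 3; 7; 8; 9; 10]; [:: 2; 4; 5; 6; 7; 8]; [:: 2; 4; 5; 6; 10; 11]; [:: 2; 4; 5; 7; 9; 10]; [:: 2; 4; 6; 8; 9; 11]; [:: 2; 4; 7; 8; 10; 11]; [:: 2; 5; 6; 8; 9; 10]; [:: 2; 5; 7; 8; 9; 11]; [:: 2; 6; 7; 9; 10; 11]; [:: 3; 4; 5; 6; 8; 11]; [:: 3; 4; 5; 6; 9; 10]; [:: 3; 4; 5; 7; 8; 10]; [:: 3; 4; 6; 7; 10; 11]; [:: 3; 4; 7; 8; 9; 11]; [:: 3; 5; 6; 7; 8; 9]; [:: 3; 5; 7; 9; 10; 11]; [:: 3; 6; 8; 9; 10; 11]; [:: 4; 5; 6; 7; 9; 11]; [:: 4; 5; 8; 9; 10; 11]; [:: 4; 6; 7; 8; 9; 10]; [:: 5; 6; 7; 8; 10; 11]].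
Definition fam2 : seq (seq nat) := [:: [:: 0; 10; 1; 2; 3; 5; 6; 4; 7; 9; 8; 11]; [:: 10; 1; 2; 0; 3; 5; 4; 7; 6; 8; 9; 11]; [:: 1; 0; 3; 2; 4; 5; 6; 8; 9; 7; 10; 11]; [:: 0; 9; 1; 3; 2; 5; 4; 6; 7; 8; 10; 11]; [:: 9; 0; 1; 2; 4; 5; 3; 6; 8; 7; 10; 11]; [:: 9; 7; 10; 11; 0; 2; 3; 4; 1; 6; 5; 8]; [:: 9; 8; 10; 11; 1; 2; 0; 4; 5; 6; 3; 7]; [:: 10; 9; 11; 1; 0; 3; 2; 5; 6; 4; 7; 8]; [:: 10; 0; 1; 3; 4; 2; 5; 7; 6; 9; 8; 11]; [:: 1; 0; 2; 3; 4; 6; 7; 5; 8; 10; 9; 11]; [:: 10; 3; 11; 0; 1; 2; 4; 5; 6; 7; 8; 9]; [:: 4; 7; 8; 9; 10; 11; 1; 0; 2; 3; 5; 6]; [:: 4; 7; 8; 9; 10; 11; 1; 0; 2; 3; 5; 6]; [:: 0; 1; 2; 3; 4; 5; 6; 7; 8; 9; 10; 11]].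
Definition fam15 : seq (seq nat) := [:: [:: 1; 10; 0; 3; 2; 5; 4; 7; 6; 8; 9; 11]; [:: 2; 11; 3; 1; 5; 4; 7; 6; 9; 8; 10; 0]; [:: 5; 7; 8; 9; 10; 11; 1; 2; 0; 3; 4; 6]; [:: 11; 8; 1; 0; 2; 3; 4; 5; 7; 6; 9; 10]; [:: 11; 7; 0; 1; 2; 3; 4; 6; 5; 8; 9; 10]; [:: 3; 2; 0; 5; 4; 6; 8; 7; 9; 11; 1; 10]; [:: 3; 2; 1; 4; 5; 7; 6; 9; 10; 8; 11; 0]; [:: 1; 11; 2; 0; 4; 3; 5; 7; 6; 8; 10; 9]; [:: 1; 7; 3; 4; 5; 2; 6; 8; 9; 10; 11; 0]; [:: 9; 8; 10; 11; 1; 2; 0; 3; 5; 6; 4; 7]; [:: 0; 9; 2; 1; 4; 3; 5; 6; 8; 7; 10; 11]; [:: 7; 10; 11; 1; 0; 3; 2; 4; 5; 6; 8; 9]; [:: 11; 10; 0; 2; 1; 4; 5; 6; 3; 7; 8; 9]; [:: 10; 8; 11; 0; 2; 3; 4; 1; 5; 7; 6; 9]; [:: 5; 3; 6; 4; 7; 8; 10; 9; 11; 0; 1; 2]; [:: 1; 11; 2; 3; 4; 5; 6; 7; 9; 8; 10; 0]; [:: 9; 0; 1; 3; 2; 5; 4; 7; 8; 6; 10; 11]; [:: 2; 0; 1; 3; 5; 6; 4; 8; 7; 10; 11; 9]; [:: 4; 6; 7; 8; 9; 10; 11; 0; 2; 1; 3; 5]; [:: 11; 9; 1; 2; 0; 3;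 5; 6; 4; 8; 7; 10]; [:: 11; 10; 0; 1; 2; 3; 5; 4; 7; 8; 9; 6]; [:: 4; 1; 2; 5; 6; 7; 9; 8; 10; 11; 0; 3]; [:: 2; 11; 1; 4; 3; 5; 6; 7; 9; 8; 10; 0]; [:: 9; 7; 10; 11; 0; 1; 2; 3; 4; 6; 5; 8]; [:: 1; 11; 3; 4; 5; 2; 6; 7; 8; 9; 10; 0]; [:: 11; 8; 1; 0; 2; 4; 5; 6; 3; 7; 9; 10]; [:: 0; 10; 2; 3; 1; 5; 4; 6; 7; 9; 8; 11]; [:: 11; 1; 2; 3; 5; 4; 6; 7; 8; 10; 9; 0]; [:: 1; 10; 2; 0; 3; 4; 6; 5; 7; 9; 8; 11]; [:: 2; 11; 0; 3; 5; 4; 6; 7; 9; 10; 8; 1]; [:: 11; 9; 0; 1; 3; 2; 5; 6; 4; 7; 8; 10]; [:: 1; 11; 2; 3; 0; 4; 5; 6; 7; 8; 9; 10]; [:: 10; 2; 11; 0; 1; 3; 4; 5; 6; 7; 8; 9]; [:: 9; 7; 10; 11; 1; 2; 3; 4; 5; 0; 6; 8]; [:: 11; 2; 3; 1; 4; 5; 6; 7; 9; 10; 8; 0]; [:: 1; 10; 2; 3; 4; 0; 6; 7; 5; 8; 9; 11]; [:: 5; 2; 4; 6; 7; 8; 9; 10; 0; 11; 1; 3]; [:: 11; 6; 1; 2; 0; 3; 4; 5; 7; 8; 9; 10]; [:: 2; 11; 4; 3; 5; 6; 8; 9; 7; 10; 0; 1]; [:: 1; 10; 2; 3; 4; 5;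 7; 8; 6; 9; 11; 0]; [:: 8; 10; 11; 0; 1; 2; 3; 4; 6; 5; 7; 9]; [:: 7; 5; 8; 9; 10; 11; 0; 2; 1; 3; 4; 6]; [:: 0; 11; 2; 1; 4; 3; 6; 7; 8; 5; 9; 10]; [:: 0; 10; 1; 2; 4; 3; 6; 7; 5; 9; 8; 11]; [:: 7; 0; 2; 3; 1; 4; 5; 6; 8; 9; 10; 11]; [:: 2; 11; 1; 3; 4; 6; 5; 8; 9; 10; 7; 0]; [:: 9; 8; 10; 11; 0; 1; 2; 4; 5; 3; 6; 7]; [:: 2; 0; 3; 4; 5; 7; 8; 6; 9; 10; 11; 1]; [:: 8; 10; 11; 1; 2; 3; 4; 5; 0; 6; 7; 9]; [:: 1; 11; 2; 4; 3; 5; 7; 6; 9; 8; 10; 0]; [:: 1; 8; 0; 2; 3; 5; 6; 7; 4; 9; 10; 11]; [:: 3; 10; 2; 4; 5; 6; 7; 9; 8; 11; 0; 1]; [:: 3; 11; 4; 5; 7; 6; 8; 10; 9; 0; 2; 1]; [:: 2; 10; 1; 3; 4; 6; 5; 7; 8; 9; 11; 0]; [:: 8; 6; 9; 10; 11; 0; 1; 2; 4; 5; 3; 7]; [:: 8; 7; 9; 10; 11; 0; 2; 1; 4; 5; 3; 6]; [:: 5; 10; 11; 0; 1; 2; 3; 4; 6; 7; 8; 9]; [:: 6; 0; 1; 2; 3; 5; 4; 7; 8; 9; 10; 11]; [:: 0; 11; 1; 2; 3; 5; 4; 7; 6; 8; 10; 9]; [:: 2; 0; 1; 3; 5; 4;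 7; 6; 8; 9; 11; 10]; [:: 10; 8; 11; 1; 2; 0; 3; 4; 6; 7; 5; 9]; [:: 1; 11; 2; 0; 4; 3; 5; 7; 6; 9; 8; 10]; [:: 7; 9; 10; 11; 0; 2; 3; 1; 4; 5; 6; 8]; [:: 5; 8; 9; 10; 11; 0; 1; 2; 3; 4; 6; 7]; [:: 1; 10; 3; 2; 4; 5; 7; 8; 9; 6; 11; 0]; [:: 2; 0; 1; 4; 3; 6; 7; 5; 9; 10; 8; 11]; [:: 2; 10; 3; 5; 6; 4; 7; 8; 9; 11; 0; 1]; [:: 10; 3; 11; 1; 0; 2; 4; 5; 6; 7; 8; 9]; [:: 10; 1; 2; 3; 4; 6; 5; 7; 8; 9; 11; 0]; [:: 2; 5; 6; 7; 8; 9; 10; 11; 1; 0; 3; 4]; [:: 8; 10; 11; 0; 1; 3; 2; 5; 6; 4; 7; 9]; [:: 10; 8; 11; 0; 1; 2; 4; 5; 3; 6; 7; 9]; [:: 2; 0; 3; 1; 4; 6; 5; 7; 8; 10; 9; 11]; [:: 4; 3; 5; 6; 7; 8; 9; 10; 11; 0; 2; 1]; [:: 8; 10; 11; 0; 1; 2; 4; 5; 3; 7; 6; 9]; [:: 11; 2; 3; 1; 4; 5; 6; 7; 8; 9; 10; 0]; [:: 0; 10; 1; 2; 4; 3; 5; 7; 8; 9; 6; 11]; [:: 10; 1; 2; 0; 3; 4; 6; 7; 5; 9; 8; 11]; [:: 7; 9; 10; 11; 0; 1; 2; 4; 5; 3; 6; 8]; [:: 8; 11; 0; 2; 1; 4;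 5; 6; 7; 3; 9; 10]; [:: 1; 11; 2; 3; 4; 5; 6; 8; 7; 9; 10; 0]; [:: 6; 8; 9; 10; 11; 1; 2; 3; 4; 5; 0; 7]; [:: 10; 0; 2; 3; 4; 1; 5; 7; 6; 9; 8; 11]; [:: 11; 9; 1; 2; 0; 4; 3; 5; 7; 8; 6; 10]; [:: 0; 11; 1; 2; 4; 5; 3; 6; 8; 7; 9; 10]; [:: 9; 8; 10; 11; 0; 1; 2; 4; 3; 5; 7; 6]; [:: 10; 1; 2; 4; 5; 6; 7; 8; 3; 9; 11; 0]; [:: 11; 1; 2; 3; 5; 4; 6; 7; 9; 8; 10; 0]; [:: 7; 10; 11; 1; 0; 2; 4; 5; 6; 3; 8; 9]; [:: 1; 9; 2; 0; 3; 4; 6; 5; 7; 8; 10; 11]; [:: 3; 2; 1; 4; 5; 7; 6; 8; 9; 10; 11; 0]; [:: 4; 8; 9; 10; 11; 0; 1; 3; 2; 5; 6; 7]; [:: 11; 7; 0; 1; 3; 2; 5; 6; 4; 8; 9; 10]; [:: 11; 10; 1; 2; 3; 0; 4; 6; 5; 7; 8; 9]; [:: 0; 10; 1; 2; 3; 5; 4; 7; 6; 8; 9; 11]; [:: 7; 0; 2; 4; 3; 5; 6; 8; 9; 10; 11; 1]; [:: 10; 9; 11; 0; 2; 1; 4; 5; 6; 7; 3; 8]; [:: 11; 8; 1; 2; 3; 0; 4; 6; 5; 7; 9; 10]; [:: 1; 11; 2; 3; 0; 5; 6; 4; 7; 8; 9; 10]; [:: 10; 9; 11; 0; 1; 2;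 3; 5; 4; 7; 8; 6]; [:: 10; 9; 11; 0; 1; 2; 4; 3; 5; 7; 8; 6]; [:: 9; 4; 10; 11; 1; 0; 3; 2; 5; 6; 7; 8]; [:: 10; 8; 11; 0; 2; 3; 1; 4; 5; 6; 7; 9]; [:: 1; 11; 2; 3; 0; 4; 5; 6; 8; 9; 7; 10]; [:: 6; 10; 11; 1; 2; 3; 4; 5; 0; 7; 8; 9]].

Definition F2 := map (fun g => map (apply_perm g) D0) fam2.
Definition F15 := map (fun g => map (apply_perm g) D0) fam15.

Lemma chk12_2 : check 12 5 6 2 F2. Proof. by vm_compute. Qed.
Lemma chk12_15 : check 12 5 6 15 F15. Proof. by vm_compute. Qed.
Lemma chk11_2 : check 11 4 5 2 (map derive F2). Proof. by vm_compute. Qed.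
Lemma chk11_15 : check 11 4 5 15 (map derive F15). Proof. by vm_compute. Qed.

Theorem theorem23 (mu : nat) :
  2 <= mu -> mu \notin [:: 3; 5; 7; 9; 11; 13] ->
  (exists F : seq {set {set 'I_11}}, large_set_mult 4 5 11 mu F) /\
  (exists F : seq {set {set 'I_12}}, large_set_mult 5 6 12 mu F).
Proof.
move=> h2 hn.
have X1 := @check_ok _ _ _ _ _ chk11_2.
have X2 := @check_ok _ _ _ _ _ chk11_15.
have X3 := @check_ok _ _ _ _ _ chk12_2.
have X4 := @check_ok _ _ _ _ _ chk12_15.
have Y1 := ls_all X1 X2.
have Y2 := ls_all X3 X4.
split; [exact: (Y1 mu h2 hn) | exact: (Y2 mu h2 hn)].
Qed.
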